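(* For every $\Gamma\cup\{\varphi\}\subseteq{\bf F}(\Sigma,\mathcal{V})$: $\Gamma\vdash_{C_1}\varphi$ iff $\Gamma\vDash^{\mathsf{RN}}_{\mathcal{RM}_{C_1}}\varphi$.
   Context: $\Sigma$ has unary $\neg$ and binary $\wedge,\vee,\to$; ${\bf F}(\Sigma,\mathcal{V})$ its formulas over a denumerable set $\mathcal{V}$ of variables. Abbreviations: $\alpha^0=\alpha$, $\alpha^{k+1}=\neg(\alpha^k\wedge\neg\alpha^k)$; $\alpha^{(1)}=\alpha^1$, $\alpha^{(k+1)}=\alpha^{(k)}\wedge\alpha^{k+1}$. For $n\ge1$, $C_n$ is the Hilbert calculus with Modus Ponens and axiom schemata: $\alpha\to(\beta\to\alpha)$; $(\alpha\to(\beta\to\gamma))\to((\alpha\to\beta)\to(\alpha\to\gamma))$; $\alpha\to(\beta\to(\alpha\wedge\beta))$; $(\alpha\wedge\beta)\to\alpha$; $(\alpha\wedge\beta)\to\beta$; $\alpha\to(\alpha\vee\beta)$; $\beta\to(\alpha\vee\beta)$; $(\alpha\to\gamma)\to((\beta\to\gamma)\to((\alpha\vee\beta)\to\gamma))$; $\alpha\vee\neg\alpha$; $\neg\neg\alpha\to\alpha$; (bc$_n$) $\alpha^{(n)}\to(\alpha\to(\neg\alpha\to\beta))$; (P$_n$) $(\alpha^{(n)}\wedge\beta^{(n)})\to((\alpha\wedge\beta)^{(n)}\wedge(\alpha\vee\beta)^{(n)}\wedge(\alpha\to\beta)^{(n)})$. $\mathcal{A}_{C_1}$ is the $\Sigma$-multialgebra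 with universe $\{F,t,T\}$, $D=\{t,T\}$, and: $F\tilde\vee F=\{F\}$, $F\tilde\vee T=T\tilde\vee F=T\tilde\vee T=\{T\}$, $x\tilde\vee y=D$ whenever $t\in\{x,y\}$; $x\tilde\wedge y=\{F\}$ if $F\in\{x,y\}$, $T\tilde\wedge T=\{T\}$, $t\tilde\wedge t=t\tilde\wedge T=T\tilde\wedge t=D$; $\tilde\neg F=\{T\}$, $\tilde\neg t=D$, $\tilde\neg T=\{F\}$; $F\tilde\to F=F\tilde\to T=T\tilde\to T=\{T\}$, $t\tilde\to F=T\tilde\to F=\{F\}$, $x\tilde\to t=D$ for all $x$, $t\tilde\to T=D$. A valuation is a map $\nu$ with $\nu(\neg\alpha)\in\tilde\neg\nu(\alpha)$ and $\nu(\alpha\#\beta)\in\nu(\alpha)\tilde\#\nu(\beta)$. $\mathcal{F}_{C_1}$ is the set of valuations with $\nu(\alpha)=t\Rightarrow\nu(\alpha\wedge\neg\alpha)=T$ for all $\alpha$. $\mathcal{RM}_{C_1}=(\mathcal{A}_{C_1},D,\mathcal{F}_{C_1})$; $\Gamma\vDash^{\mathsf{RN}}_{\mathcal{RM}_{C_1}}\varphi$ iff every $\nu\in\mathcal{F}_{C_1}$ with $\nu[\Gamma]\subseteq D$ has $\nu(\varphi)\in D$. *)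

(* Defs.v *)
Inductive form : Type :=
| Var : nat -> form
| Neg : form -> form
| And : form -> form -> form
| Or  : form -> form -> form
| Imp : form -> form -> form.

Fixpoint circ (k : nat) (a : form) : form :=
  match k with
  | O => a
  | S k' => Neg (And (circ k' a) (Neg (circ k' a)))
  end.

Fixpoint circs (k : nat) (a : form) : form :=
  match k with
  | O => circ 1 a            (* unused: only k >= 1 is meaningful *)
  | S O => circ 1 a
  | S k' => And (circs k' a) (circ k a)
  end.

Inductive Cn_axiom (n : nat) : form -> Prop :=
| ax1 a b : Cn_axiom n (Imp a (Imp b a))
| ax2 a b c : Cn_axiom n (Imp (Imp a (Imp b c)) (Imp (Imp a b) (Imp a c)))
| ax3 a b : Cn_axiom n (Imp a (Imp b (And a b)))
| ax4 a b : Cn_axiom n (Imp (And a b) a)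
| ax5 a b : Cn_axiom n (Imp (And a b) b)
| ax6 a b : Cn_axiom n (Imp a (Or a b))
| ax7 a b : Cn_axiom n (Imp b (Or a b))
| ax8 a b c : Cn_axiom n (Imp (Imp a c) (Imp (Imp b c) (Imp (Or a b) c)))
| ax9 a : Cn_axiom n (Or a (Neg a))
| ax10 a : Cn_axiom n (Imp (Neg (Neg a)) a)
| axbc a b : Cn_axiom n (Imp (circs n a) (Imp a (Imp (Neg a) b)))
| axP a b : Cn_axiom n
    (Imp (And (circs n a) (circs n b))
         (And (And (circs n (And a b)) (circs n (Or a b))) (circs n (Imp a b)))).

Inductive derivable (n : nat) (Gamma : form -> Prop) : form -> Prop :=
| d_prem a : Gamma a -> derivable n Gamma a
| d_ax a : Cn_axiom n a -> derivable n Gamma a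
| d_mp a b : derivable n Gamma a -> derivable n Gamma (Imp a b) -> derivable n Gamma b.

Inductive V3 : Type := vF | vt | vT.

Definition designated (x : V3) : Prop := x = vt \/ x = vT.

(* Multioperations, as sets of values (predicates) *)
Definition mor (x y z : V3) : Prop :=
  match x, y with
  | vt, _ | _, vt => designated z
  | vF, vF => z = vF
  | _, _ => z = vT
  end.

Definition mand (x y z : V3) : Prop :=
  match x, y with
  | vF, _ | _, vF => z = vF
  | vT, vT => z = vT
  | _, _ => designated z
  end.

Definition mneg (x z : V3) : Prop :=
  match x with
  | vF => z = vT
  | vt => designated z
  | vT => z = vF
  end.

Definition mimp (x y z : V3) : Prop :=
  match x, y with
  | _, vt => designated z
  | vt, vT => designated z
  | vF, _ => z = vT
  | vT, vT => z = vT
  | _, vF => z = vF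
  end.

Definition valuation (v : form -> V3) : Prop :=
  forall a b,
    mneg (v a) (v (Neg a)) /\
    mand (v a) (v b) (v (And a b)) /\
    mor (v a) (v b) (v (Or a b)) /\
    mimp (v a) (v b) (v (Imp a b)).

Definition F_C1 (v : form -> V3) : Prop :=
  valuation v /\ forall a, v a = vt -> v (And a (Neg a)) = vT.

Definition RN_consequence (Gamma : form -> Prop) (phi : form) : Prop :=
  forall v, F_C1 v -> (forall g, Gamma g -> designated (v g)) -> designated (v phi).

(* Main.v *)
Require Import Defs.
From Stdlib Require Import Classical ClassicalEpsilon Arith Lia Cantor.

Notation der := (derivable 1).
Definition add (G : form -> Prop) a := fun x => G x \/ x = a.

Lemma der_mono (G H : form -> Prop) a : (forall x, G x -> H x) -> der G a -> der H a.
Proof. intros S D; induction D. apply d_prem; auto. apply d_ax; auto. exact (d_mp _ _ _ _ IHD1 IHD2). Qed.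

Lemma mp G a b : der G a -> der G (Imp a b) -> der G b.
Proof. intros H1 H2; exact (d_mp _ _ _ _ H1 H2). Qed.

Lemma axd G a : Cn_axiom 1 a -> der G a.
Proof. apply d_ax. Qed.

Lemma imp_refl G a : der G (Imp a a).
Proof.
  apply (mp _ (Imp a (Imp a a))); [apply axd, ax1|].
  apply (mp _ (Imp a (Imp (Imp a a) a))); [apply axd, ax1|].
  apply axd, ax2.
Qed.

Lemma deduction G a b : der (add G a) b -> der G (Imp a b).
Proof.
  intros D; induction D.
  - destruct H as [H|H].
    + apply (mp _ a0); [apply d_prem; auto| apply axd, ax1].
    + subst; apply imp_refl.
  - apply (mp _ a0); [apply axd; auto| apply axd, ax1].
  - apply (mp _ (Imp a a0)); auto.
    apply (mp _ (Imp a (Imp a0 b))); auto. apply axd, ax2.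
Qed.

Fixpoint enc (f : form) : nat :=
  match f with
  | Var n => to_nat (0, n)
  | Neg a => to_nat (1, enc a)
  | And a b => to_nat (2, to_nat (enc a, enc b))
  | Or a b => to_nat (3, to_nat (enc a, enc b))
  | Imp a b => to_nat (4, to_nat (enc a, enc b))
  end.

Lemma to_nat_inj p q : to_nat p = to_nat q -> p = q.
Proof. intros H. rewrite <- (cancel_of_to p), <- (cancel_of_to q), H. reflexivity. Qed.

Lemma enc_inj : forall f g, enc f = enc g -> f = g.
Proof.
  induction f; destruct g; cbn [enc]; intros H; apply to_nat_inj in H;
  try discriminate; apply (f_equal snd) in H; cbn [snd] in H; try (f_equal; auto; fail);
  apply to_nat_inj in H; injection H as H1 H2; f_equal; auto.
Qed.

Section Lind.
Variable Gamma : form -> Prop.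
Variable phi : form.
Hypothesis nd : ~ der Gamma phi.

Fixpoint stage (k : nat) : form -> Prop :=
  match k with
  | O => Gamma
  | S k => fun x => stage k x \/ (enc x = k /\ ~ der (add (stage k) x) phi)
  end.

Lemma stage_mono k l x : k <= l -> stage k x -> stage l x.
Proof. induction 1; simpl; auto. Qed.

Lemma stage_nd k : ~ der (stage k) phi.
Proof.
  induction k; simpl; auto.
  intros D.
  destruct (classic (exists x, enc x = k /\ ~ der (add (stage k) x) phi)) as [[x [Ex Nx]]|N].
  - apply Nx. eapply der_mono; [|exact D]. intros y [Hy|[Ey Ny]]; [left; auto|].
    right. apply enc_inj; congruence.
  - apply IHk. eapply der_mono; [|exact D]. intros y [Hy|[Ey Ny]]; auto.
    exfalso; apply N; eauto.
Qed.

Definition Delta x := exists k, stage k x.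

Lemma Delta_fin a : der Delta a -> exists k, der (stage k) a.
Proof.
  induction 1.
  - destruct H as [k H]. exists k. apply d_prem; auto.
  - exists 0. apply d_ax; auto.
  - destruct IHderivable1 as [k1 H1], IHderivable2 as [k2 H2].
    exists (max k1 k2). apply (mp _ a).
    + eapply der_mono; [|exact H1]. intros; eapply stage_mono; [|eauto]; lia.
    + eapply der_mono; [|exact H2]. intros; eapply stage_mono; [|eauto]; lia.
Qed.

Lemma Delta_nd : ~ der Delta phi.
Proof. intros D. destruct (Delta_fin _ D) as [k Hk]. exact (stage_nd k Hk). Qed.

Lemma Gamma_Delta x : Gamma x -> Delta x.
Proof. intros; exists 0; auto. Qed.

Lemma Delta_max a : ~ Delta a -> der (add Delta a) phi.
Proof.
  intros N. destruct (classic (der (add (stage (enc a)) a) phi)) as [D|D].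
  - eapply der_mono; [|exact D]. intros y [Hy|Hy]; [left; exists (enc a); auto| right; auto].
  - exfalso. apply N. exists (S (enc a)). simpl. auto.
Qed.

Lemma Delta_closed a : der Delta a -> Delta a.
Proof.
  intros D. apply NNPP. intros N. apply Delta_nd.
  apply (mp _ a); auto. apply deduction. apply Delta_max; auto.
Qed.

Lemma D_in a : Delta a -> der Delta a.
Proof. apply d_prem. Qed.

Lemma D_mp a b : Delta a -> Delta (Imp a b) -> Delta b.
Proof. intros; apply Delta_closed; apply (mp _ a); apply D_in; auto. Qed.

Lemma D_ax a : Cn_axiom 1 a -> Delta a.
Proof. intros; apply Delta_closed, axd; auto. Qed.

Lemma D_or a b : Delta (Or a b) -> Delta a \/ Delta b.
Proof.
  intros H. apply NNPP. intros N. apply Delta_nd.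
  assert (Ha := deduction _ _ _ (Delta_max a ltac:(tauto))).
  assert (Hb := deduction _ _ _ (Delta_max b ltac:(tauto))).
  apply (mp _ (Or a b)); [apply D_in; auto|].
  apply (mp _ (Imp b phi)); auto. apply (mp _ (Imp a phi)); auto. apply axd, ax8.
Qed.

Lemma D_or_intro a b : Delta a \/ Delta b -> Delta (Or a b).
Proof. intros [H|H]; [apply (D_mp a)|apply (D_mp b)]; auto; apply D_ax; constructor. Qed.

Lemma D_em a : Delta a \/ Delta (Neg a).
Proof. apply D_or, D_ax, ax9. Qed.

Lemma D_nn a : Delta (Neg (Neg a)) -> Delta a.
Proof. intros; apply (D_mp (Neg (Neg a))); auto; apply D_ax; constructor. Qed.

Lemma D_and a b : Delta (And a b) <-> Delta a /\ Delta b.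
Proof.
  split.
  - intros; split; apply (D_mp (And a b)); auto; apply D_ax; constructor.
  - intros [Ha Hb]. apply (D_mp b); auto. apply (D_mp a); auto. apply D_ax; constructor.
Qed.

Lemma D_circ_in a : ~ (Delta a /\ Delta (Neg a)) -> Delta (circ 1 a).
Proof.
  intros N. destruct (D_em (circ 1 a)) as [H|H]; auto.
  simpl in H. apply D_nn in H. apply D_and in H. tauto.
Qed.

Lemma D_bc a : Delta (circ 1 a) -> Delta a -> Delta (Neg a) -> False.
Proof.
  intros H1 H2 H3. apply Delta_nd.
  apply (mp _ (Neg a)); [apply D_in; auto|].
  apply (mp _ a); [apply D_in; auto|].
  apply (mp _ (circ 1 a)); [apply D_in; auto|].
  apply axd. exact (axbc 1 a phi).
Qed.

Lemma D_P a b : Delta (circ 1 a) -> Delta (circ 1 b) ->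
  Delta (circ 1 (And a b)) /\ Delta (circ 1 (Or a b)) /\ Delta (circ 1 (Imp a b)).
Proof.
  intros Ha Hb.
  assert (H : Delta (And (And (circs 1 (And a b)) (circs 1 (Or a b))) (circs 1 (Imp a b)))).
  { eapply D_mp; [|apply D_ax, (axP 1 a b)]. apply D_and; split; auto. }
  apply D_and in H. destruct H as [H H3]. apply D_and in H. destruct H. auto.
Qed.

Lemma D_imp_F a b : ~ Delta a -> Delta (Imp a b).
Proof.
  intros N. apply Delta_closed. apply deduction.
  assert (Hc := D_circ_in a ltac:(tauto)).
  assert (Hn : Delta (Neg a)) by (destruct (D_em a); tauto).
  apply (mp _ (Neg a)); [apply d_prem; left; auto|].
  apply (mp _ a); [apply d_prem; right; auto|].
  apply (mp _ (circ 1 a)); [apply d_prem; left; auto|].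
  apply axd. exact (axbc 1 a b).
Qed.

Lemma D_imp_T a b : Delta b -> Delta (Imp a b).
Proof. intros; apply (D_mp b); auto; apply D_ax; constructor. Qed.

Definition val (a : form) : V3 :=
  if excluded_middle_informative (Delta a) then
    (if excluded_middle_informative (Delta (Neg a)) then vt else vT)
  else vF.

Lemma val_F a : val a = vF <-> ~ Delta a.
Proof. unfold val; destruct excluded_middle_informative; [destruct excluded_middle_informative|]; split; intros; try discriminate; tauto. Qed.
Lemma val_T a : val a = vT <-> Delta a /\ ~ Delta (Neg a).
Proof. unfold val; destruct excluded_middle_informative; [destruct excluded_middle_informative|]; split; intros; try discriminate; tauto. Qed.
Lemma val_t a : val a = vt <-> Delta a /\ Delta (Neg a).
Proof. unfold val; destruct excluded_middle_informative; [destruct excluded_middle_informative|]; split; intros; try discriminate; tauto. Qed.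
Lemma val_D a : designated (val a) <-> Delta a.
Proof. unfold designated, val; destruct excluded_middle_informative; [destruct excluded_middle_informative|]; split; intros; try discriminate; intuition discriminate. Qed.

Lemma val_circ a : val a <> vt -> Delta (circ 1 a).
Proof. intros H. apply D_circ_in. intros C. apply H, val_t; auto. Qed.

Lemma notT_closed c : Delta (circ 1 c) -> Delta c -> val c = vT.
Proof.
  intros Hc H. apply val_T. split; auto. intros N. eapply D_bc; eauto.
Qed.

Lemma val_valuation : F_C1 val.
Proof.
  split.
  - intros a b. repeat split.
    + destruct (val a) eqn:E; simpl.
      * apply val_F in E. apply val_T. split; [destruct (D_em a); tauto|].
        intros N; apply D_nn in N; tauto.
      * apply val_t in E. apply val_D. tauto.
      * apply val_T in E. apply val_F. tauto.
    + destruct (val a) eqn:Ea, (val b) eqn:Eb; simpl;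
      try (apply val_F; rewrite D_and; try apply val_F in Ea; try apply val_F in Eb; tauto);
      try (apply val_D; apply D_and; split; apply val_D; rewrite ?Ea, ?Eb; unfold designated; auto).
      apply notT_closed; [|apply D_and; split; apply val_D; rewrite ?Ea, ?Eb; unfold designated; auto].
      apply D_P; apply val_circ; congruence.
    + destruct (val a) eqn:Ea, (val b) eqn:Eb; simpl;
      try (apply val_D; apply D_or_intro; rewrite <- !val_D, Ea, Eb; unfold designated; tauto).
      * apply val_F. intros H; apply D_or in H. rewrite <- !val_D, Ea, Eb in H; unfold designated in H.
        intuition discriminate.
      * apply notT_closed; [apply D_P; apply val_circ; congruence|].
        apply D_or_intro; rewrite <- !val_D, Ea, Eb; unfold designated; tauto.
      * apply notT_closed; [apply D_P; apply val_circ; congruence|].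
        apply D_or_intro; rewrite <- !val_D, Ea, Eb; unfold designated; tauto.
      * apply notT_closed; [apply D_P; apply val_circ; congruence|].
        apply D_or_intro; rewrite <- !val_D, Ea, Eb; unfold designated; tauto.
    + destruct (val a) eqn:Ea, (val b) eqn:Eb; simpl;
      try (apply val_D; apply D_imp_T; apply val_D; rewrite Eb; unfold designated; tauto);
      try (apply notT_closed; [apply D_P; apply val_circ; congruence|]);
      try solve [apply D_imp_F; apply val_F; auto];
      try (apply D_imp_T; apply val_D; rewrite Eb; unfold designated; tauto).
      all: try (apply val_F; intros H; apply (D_mp a b) in H; [|apply val_D; rewrite Ea; unfold designated; auto];
        apply val_F in Eb; auto).
  - intros a E. apply val_t in E. apply val_T. split; [apply D_and; tauto|].
    intros N. destruct E as [E1 E2]. exact (D_bc a N E1 E2).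
Qed.

End Lind.
Lemma circs1 a : circs 1 a = circ 1 a. Proof. reflexivity. Qed.

Section Sound.
Variable v : form -> V3.
Hypothesis Hv : F_C1 v.

Lemma circ1_val a : designated (v (circ 1 a)) <-> v a <> vt.
Proof.
  destruct Hv as [Hval Hr]. simpl.
  destruct (Hval a (Neg a)) as [Hn [Ha _]].
  destruct (Hval (And a (Neg a)) a) as [Hn2 _].
  unfold designated in *.
  destruct (v a) eqn:E; simpl in *.
  - rewrite Ha in Hn2; simpl in Hn2. rewrite Hn2. split; [intros _; discriminate| auto].
  - rewrite (Hr a E) in Hn2. simpl in Hn2. rewrite Hn2. split; [intros [H|H]; discriminate| intros H; congruence].
  - rewrite Hn in Ha. simpl in Ha. rewrite Ha in Hn2; simpl in Hn2. rewrite Hn2. split; [intros _; discriminate| auto].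
Qed.

Lemma Dimp a b : designated (v (Imp a b)) <-> (designated (v a) -> designated (v b)).
Proof.
  destruct Hv as [Hval _]. destruct (Hval a b) as [_ [_ [_ H]]].
  unfold designated in *. destruct (v a), (v b); simpl in H; intuition (try congruence);
  try (left; congruence); try (right; congruence); try (rewrite H in *; discriminate).
Qed.

Lemma Dand a b : designated (v (And a b)) <-> (designated (v a) /\ designated (v b)).
Proof.
  destruct Hv as [Hval _]. destruct (Hval a b) as [_ [H _]].
  unfold designated in *. destruct (v a), (v b); simpl in H; intuition (try congruence);
  try (left; congruence); try (right; congruence); try (rewrite H in *; discriminate).
Qed.

Lemma Dor a b : designated (v (Or a b)) <-> (designated (v a) \/ designated (v b)).
Proof.
  destruct Hv as [Hval _]. destruct (Hval a b) as [_ [_ [H _]]].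
  unfold designated in *. destruct (v a), (v b); simpl in H; intuition (try congruence);
  try (left; congruence); try (right; congruence); try (rewrite H in *; discriminate).
Qed.

Lemma Dneg a : ~ designated (v a) -> designated (v (Neg a)).
Proof.
  destruct Hv as [Hval _]. destruct (Hval a a) as [H _].
  unfold designated in *. destruct (v a); simpl in H; intuition congruence.
Qed.

Lemma DnegT a : v a = vT -> v (Neg a) = vF.
Proof.
  destruct Hv as [Hval _]. destruct (Hval a a) as [H _]. intros E; rewrite E in H; exact H.
Qed.

Lemma Dnegneg a : designated (v (Neg (Neg a))) -> designated (v a).
Proof.
  destruct Hv as [Hval _]. destruct (Hval a a) as [H _]. destruct (Hval (Neg a) a) as [H2 _].
  unfold designated in *. destruct (v a); simpl in H; auto.
  rewrite H in H2; simpl in H2. rewrite H2. intros [E|E]; discriminate.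
Qed.

Lemma Ccomp a b : v a <> vt -> v b <> vt ->
  v (And a b) <> vt /\ v (Or a b) <> vt /\ v (Imp a b) <> vt.
Proof.
  destruct Hv as [Hval _]. destruct (Hval a b) as [_ [H1 [H2 H3]]].
  destruct (v a), (v b); simpl in *; intros; repeat split; try congruence.
Qed.

Lemma ax_sound ax : Cn_axiom 1 ax -> designated (v ax).
Proof.
  intros H; destruct H; rewrite ?circs1;
  repeat (rewrite Dimp || rewrite Dand || rewrite Dor); try tauto.
  - destruct (classic (designated (v a))); auto using Dneg.
  - apply Dnegneg.
  - rewrite circ1_val. intros Hc Ha Hna. exfalso.
    assert (v a = vT) by (destruct Ha; congruence).
    rewrite DnegT in Hna by auto. destruct Hna; discriminate.
  - rewrite !circ1_val. intros [Ha Hb]. destruct (Ccomp a b Ha Hb) as [? [? ?]]. tauto.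
Qed.

End Sound.

Lemma soundness G phi : derivable 1 G phi -> RN_consequence G phi.
Proof.
  intros D v Hv HG. induction D; auto. apply ax_sound; auto.
  apply (Dimp v Hv a b); auto.
Qed.

Theorem mainTheorem9 : forall (Gamma : form -> Prop) (phi : form),
  derivable 1 Gamma phi <-> RN_consequence Gamma phi.
Proof.
  intros Gamma phi. split; [apply soundness|].
  intros H. apply NNPP. intros nd.
  assert (Hd := H (val Gamma phi) (val_valuation Gamma phi nd)
                  (fun g Hg => proj2 (val_D Gamma phi g) (Gamma_Delta Gamma phi g Hg))).
  apply (Delta_nd Gamma phi nd). apply d_prem.
  exact (proj1 (val_D Gamma phi phi) Hd).
Qed.
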